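(* Let $n,t,k$ be positive integers with $n>(2k-1)t$ and let $G=G_n\langle t,2t,\ldots,kt\rangle$. Let $s$ be the integer with $1\le s\le t$ and $s\equiv n\pmod t$. Then $$\theta_v(G)=s\left\lceil\frac{\lceil n/t\rceil}{k+1}\right\rceil+(t-s)\left\lceil\frac{\lfloor n/t\rfloor}{k+1}\right\rceil.$$
   Context: For integers $n\ge 2$, $k\ge 1$ and $1\le t_1<t_2<\cdots<t_k\le n-1$, the Toeplitz graph $G_n\langle t_1,\ldots,t_k\rangle$ is the simple graph with vertex set $[n]=\{1,\ldots,n\}$ in which two distinct vertices $i,j$ are adjacent if and only if $|i-j|\in\{t_1,\ldots,t_k\}$. A clique cover of a graph is a set of cliques such that every vertex lies in at least one of them; $\theta_v(G)$, the (vertex) clique cover number, is the minimum size of a clique cover of $G$. *)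

(* Defs.v *)
From mathcomp Require Import all_boot.
Set Implicit Arguments. Unset Strict Implicit. Unset Printing Implicit Defensive.

(* Toeplitz graph G_n<ts> on vertex set 'I_n (vertex i : 'I_n stands for i+1 in [n]):
   distinct i, j adjacent iff |i - j| is in the list ts of differences. *)
Definition toeplitz_adj (n : nat) (ts : seq nat) : rel 'I_n :=
  fun i j => (i != j) && ((if i <= j then j - i else i - j) \in ts).

Arguments toeplitz_adj n ts : clear implicits.

Definition is_clique (T : finType) (e : rel T) (C : {set T}) : bool :=
  [forall x in C, forall y in C, (x != y) ==> e x y].

Definition is_clique_cover (T : finType) (e : rel T) (P : {set {set T}}) : bool :=
  [forall C in P, is_clique e C] && [forall x, exists C in P, x \in C].

Lemma exists_clique_cover (T : finType) (e : rel T) :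
  exists m, [exists P : {set {set T}}, (#|P| == m) && is_clique_cover e P].
Proof.
exists #|[set [set x] | x : T]|; apply/existsP; exists [set [set x] | x : T].
rewrite eqxx /=; apply/andP; split.
- apply/forallP => C; apply/implyP => /imsetP [x _ ->].
  apply/forallP => a; apply/implyP; rewrite in_set1 => /eqP ->.
  apply/forallP => b; apply/implyP; rewrite in_set1 => /eqP ->.
  by rewrite eqxx.
- apply/forallP => x; apply/existsP; exists [set x].
  by rewrite imset_f // in_set1 eqxx.
Qed.

Definition clique_cover_number (T : finType) (e : rel T) : nat :=
  ex_minn (exists_clique_cover e).

Definition ceildiv (a b : nat) : nat := (a + b - 1) %/ b.

(* Main.v *)
Require Import Defs.
From mathcomp Require Import all_boot zify.

Lemma L1 t k x y i : 0 < t -> x < y -> k.+1 %| x %/ t -> k.+1 %| y %/ t ->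
  0 < i <= k -> y - x = i * t -> False.
Proof.
move=> t0 xy dx dy /andP[i0 ik] e.
have ey : y = x + i * t by lia.
move: dy; rewrite ey divnDMl // dvdn_addr // => /(dvdn_leq i0); lia.
Qed.

Lemma L2 t k u w : 0 < t -> u < w -> u %% t = w %% t -> u %/ t %/ k.+1 = w %/ t %/ k.+1 ->
  exists i, 0 < i <= k /\ w - u = i * t.
Proof.
move=> t0 uw er eq.
have eu := divn_eq u t; have ew := divn_eq w t.
have ea := divn_eq (u %/ t) k.+1; have eb := divn_eq (w %/ t) k.+1.
have ra : u %/ t %% k.+1 < k.+1 by rewrite ltn_mod.
have rb : w %/ t %% k.+1 < k.+1 by rewrite ltn_mod.
move: eu ew ea eb ra rb er eq.
set a := u %/ t; set b := w %/ t; set r := u %% t; set r' := w %% t.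
set a1 := a %% k.+1; set b1 := b %% k.+1; set c := a %/ k.+1; set c' := b %/ k.+1.
have : r < t by rewrite ltn_mod.
clearbody a b r r' a1 b1 c c' => rt eu ew ea eb ra rb er eq.
subst r' c'.
have ab : a < b.
  case: (ltnP a b) => // ba. have : b * t <= a * t by rewrite leq_mul2r ba orbT. lia.
exists (b - a); split; first lia.
rewrite mulnBl; lia.
Qed.

Definition ceilK k x := ceildiv x k.+1.

Lemma ceil_step k q : ceildiv q.+1 k.+1 = ceildiv q k.+1 + (q %% k.+1 == 0).
Proof.
rewrite /ceildiv.
have eq := divn_eq q k.+1; have r := ltn_mod q k.+1.
move: eq r; set c := q %/ k.+1; set b := q %% k.+1; clearbody c b => eq r.
rewrite eq; case: b {eq} r => [|b] r /=.
  have -> : c * k.+1 + 0 + k.+1 - 1 = k + c * k.+1 by lia.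
  have -> : (c * k.+1 + 0).+1 + k.+1 - 1 = 0 + 1 * k.+1 + c * k.+1 by lia.
  rewrite !divnDMl // !divn_small; lia.
have -> : c * k.+1 + b.+1 + k.+1 - 1 = b + 1 * k.+1 + c * k.+1 by lia.
have -> : (c * k.+1 + b.+1).+1 + k.+1 - 1 = b.+1 + 1 * k.+1 + c * k.+1 by lia.
rewrite !divnDMl // !divn_small; lia.
Qed.

Definition hh t k q s := s * ceildiv q.+1 k.+1 + (t - s) * ceildiv q k.+1.

Lemma count_lem t k N : 0 < t ->
  \sum_(v < N) ((v %/ t) %% k.+1 == 0 : nat) = hh t k (N %/ t) (N %% t).
Proof.
move=> t0; elim: N => [|N IH]; first by rewrite big_ord0 div0n mod0n /hh /ceildiv !add0n subn1 /= divn_small // muln0.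
rewrite big_ord_recr /= IH divnS // modnS /hh ceil_step.
have rt := ltn_mod N t.
case: ifP => d.
  have : t %| (N %% t).+1.
    by move: d; rewrite {1}(divn_eq N t) -addnS dvdn_addr // dvdn_mull.
  move/(dvdn_leq (ltn0Sn _)) => h2.
  have -> : N %% t = t.-1 by lia.
  rewrite add1n !ceil_step.
  move: (ceildiv _ _) (_ == 0 : nat) => X B. nia.
rewrite /= add0n !ceil_step. move: (ceildiv _ _) (_ == 0 : nat) => X B. nia.
Qed.

Lemma mem_ts t k d : (d \in [seq i * t | i <- iota 1 k]) = [exists i : 'I_k.+1, (0 < i) && (d == i * t)].
Proof.
apply/mapP/existsP => [[i] | [i /andP [i0 /eqP ->]]].
  rewrite mem_iota => /andP [i1 ik] ->.
  have ik' : i < k.+1 by lia.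
  by exists (Ordinal ik') => /=; rewrite i1 eqxx.
by exists (val i) => //; rewrite mem_iota i0 /=; have := ltn_ord i; lia.
Qed.

Lemma cover_eq n t k : 0 < t ->
  clique_cover_number (toeplitz_adj n [seq i * t | i <- iota 1 k]) =
  #|[set v : 'I_n | (v %/ t) %% k.+1 == 0]|.
Proof.
move=> t0.
set e := toeplitz_adj n _; set I := [set v : 'I_n | _].
rewrite /clique_cover_number; case: ex_minnP => m /existsP [P /andP [/eqP HP HcP]] Hmin.
apply/eqP; rewrite eqn_leq; apply/andP; split.
-
  pose key (v : 'I_n) := (v %% t, v %/ t %/ k.+1).
  pose C (v : 'I_n) := [set u | key u == key v].
  pose P0 := [set C x | x in I].
  have cov : is_clique_cover e P0.
    apply/andP; split.
      apply/forallP => D; apply/implyP => /imsetP [x _ ->].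
      apply/forallP => u; apply/implyP; rewrite inE => /eqP ku.
      apply/forallP => w; apply/implyP; rewrite inE => /eqP kw.
      apply/implyP => uw.
      have : key u = key w by rewrite ku kw.
      case=> er eq.
      rewrite /e /toeplitz_adj uw /= mem_ts.
      case: leqP => h.
        have h' : u < w by rewrite ltn_neqAle h andbT; apply: contra uw => /eqP/val_inj ->.
        have [i [/andP [i0 ik] ei]] := L2 _ _ _ _ t0 h' er eq.
        have ik' : i < k.+1 by lia.
        by apply/existsP; exists (Ordinal ik'); rewrite /= i0 ei eqxx.
      have [i [/andP [i0 ik] ei]] := L2 _ _ _ _ t0 h (esym er) (esym eq).
      have ik' : i < k.+1 by lia.
      by apply/existsP; exists (Ordinal ik'); rewrite /= i0 ei eqxx.
    apply/forallP => u; apply/existsP.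
    pose xv := u %% t + (u %/ t %/ k.+1 * k.+1) * t.
    have xu : xv <= u.
      have e1 := divn_eq u t.
      have e2 : u %/ t %/ k.+1 * k.+1 * t <= u %/ t * t by rewrite leq_mul2r leq_divM orbT.
      rewrite /xv; lia.
    have xn : xv < n by apply: leq_ltn_trans xu (ltn_ord u).
    have dx : xv %/ t = u %/ t %/ k.+1 * k.+1.
      by rewrite /xv divnDMl // divn_small ?ltn_mod.
    have mx : xv %% t = u %% t by rewrite /xv addnC modnMDl modn_mod.
    exists (C (Ordinal xn)); rewrite inE /=.
    apply/andP; split; last by rewrite /key /= mx dx mulnK.
    apply/imsetP; exists (Ordinal xn) => //.
    by rewrite inE /= dx modnMl.
  apply: leq_trans (Hmin #|P0| _) (leq_imset_card _ _).
  by apply/existsP; exists P0; rewrite eqxx cov.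
-
  rewrite -HP.
  move: HcP => /andP [/forallP Hcl /forallP Hco].
  pose g (x : 'I_n) := odflt set0 [pick D in P | x \in D].
  have gP x : (g x \in P) && (x \in g x).
    rewrite /g; case: pickP => [D /andP [-> ->] //|].
    by have /existsP [D /andP [DP xD]] := Hco x => /(_ D); rewrite DP xD.
  rewrite -(card_in_imset (f := g)).
    apply: subset_leq_card; apply/subsetP => D /imsetP [x _ ->].
    by case/andP: (gP x).
  move=> x y; rewrite !inE => dx dy gxy.
  apply/eqP; apply/negPn/negP => xy.
  case/andP: (gP x) => gx xg; case/andP: (gP y) => _; rewrite -gxy => yg.
  have := implyP (Hcl _) gx => /forallP /(_ x) /implyP /(_ xg) /forallP /(_ y) /implyP /(_ yg) /implyP /(_ xy).
  rewrite /e /toeplitz_adj xy /= mem_ts => /existsP [i /andP [i0 /eqP ei]].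
  have ik : 0 < i <= k by rewrite i0 -ltnS ltn_ord.
  have {}dx : k.+1 %| x %/ t by []. have {}dy : k.+1 %| y %/ t by [].
  case: leqP ei => h ei.
    have h' : x < y by rewrite ltn_neqAle h andbT; apply: contra xy => /eqP/val_inj ->.
    exact: (L1 _ _ _ _ _ t0 h' dx dy ik ei).
  exact: (L1 _ _ _ _ _ t0 h dy dx ik ei).
Qed.

Lemma ceil_nt n t : 0 < t -> ceildiv n t = n %/ t + (n %% t != 0).
Proof.
move=> t0; rewrite /ceildiv {1}(divn_eq n t).
have := ltn_mod n t; rewrite t0.
move: (n %/ t) (n %% t) => q [|r] rt /=.
  have -> : q * t + 0 + t - 1 = q * t + (t - 1) by lia.
  by rewrite divnMDl // divn_small ?addn0 //; lia.
have -> : q * t + r.+1 + t - 1 = r + (q.+1) * t by lia.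
by rewrite divnDMl // divn_small ?add0n ?addn1 //; lia.
Qed.

Theorem theorem2p10 (n t k : nat) :
  0 < n -> 0 < t -> 0 < k -> (2 * k - 1) * t < n ->
  forall s : nat, 1 <= s <= t -> s = n %[mod t] ->
  clique_cover_number (toeplitz_adj n [seq i * t | i <- iota 1 k]) =
    s * ceildiv (ceildiv n t) k.+1 + (t - s) * ceildiv (n %/ t) k.+1.
Proof.
move=> n0 t0 k0 _ s /andP [s1 st] sm.
rewrite cover_eq // -sum1dep_card big_mkcond /=.
rewrite (eq_bigr (fun v : 'I_n => ((v %/ t) %% k.+1 == 0 : nat))); last by move=> i _; case: ifP.
rewrite count_lem // /hh (ceil_nt n t t0).
case: (ltnP s t) => hs.
  have -> : n %% t = s by rewrite -sm modn_small.
  by rewrite -lt0n s1 addn1.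

have e : s = t by lia.
subst s; move: sm; rewrite modnn => <-.
by rewrite addn0 subnn subn0 !mul0n add0n addn0.
Qed.
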